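(* For every integer $n\ge 3$, let $\delta_1,\dots,\delta_n$ be the eigenvalues of $\mathcal L_S$ (all positive). Then $$\sum_{i=1}^{n}\frac{1}{\delta_{i}}=\frac{\sqrt{3}\,n}{2}\cdot\frac{p^{n}-q^{n}}{p^{n}+q^{n}+2}.$$
   Context: $p=2+\sqrt3$, $q=2-\sqrt3$. $\mathcal L_S$ denotes the $n\times n$ matrix with all diagonal entries equal to $\tfrac43$, entries $(i,i+1)$ and $(i+1,i)$ equal to $-\tfrac13$ for $1\le i\le n-1$, entries $(1,n)$ and $(n,1)$ equal to $+\tfrac13$, and all other entries $0$. *)

(* Defs.v *)
From HB Require Import structures.
From mathcomp Require Import all_boot all_order all_algebra.
Set Implicit Arguments. Unset Strict Implicit. Unset Printing Implicit Defensive.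
Import Order.TTheory GRing.Theory Num.Theory.
Local Open Scope ring_scope.

(* The matrix L_S (0-based indices: paper's index k is ordinal k-1).
   Diagonal 4/3; (i,i+1),(i+1,i) -> -1/3; (1,n),(n,1) -> +1/3; else 0.
   For n >= 3 these cases are disjoint. *)
Definition LS (R : fieldType) (n : nat) : 'M[R]_n :=
  \matrix_(i < n, j < n)
    if i == j then 4%:R / 3%:R
    else if (i.+1 == j :> nat) || (j.+1 == i :> nat) then - (1 / 3%:R)
    else if ((i == 0 :> nat) && (j == n.-1 :> nat)) ||
            ((j == 0 :> nat) && (i == n.-1 :> nat)) then 1 / 3%:R
    else 0.

(* Main.v *)
Require Import Defs.
From HB Require Import structures.
From mathcomp Require Import all_boot all_order all_algebra zify ring lra.
Import Order.TTheory GRing.Theory Num.Theory.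
Set Implicit Arguments. Unset Strict Implicit. Unset Printing Implicit Defensive.
Local Open Scope ring_scope.

Section M.
Variable R : rcfType.
Variable n : nat.
Hypothesis hn : (3 <= n)%N.

Definition CC : 'M[R]_n := \matrix_(i < n, j < n)
  if (i == n.-1 :> nat) then - ((j == 0%N :> nat)%:R) else ((i.+1 == j :> nat)%:R).

Ltac cases := repeat (match goal with |- context [(?a == ?b)] =>
   lazymatch b with context[if _ then _ else _] => fail | _ => case: (@eqP _ a b) => ? end end); rewrite /=.
Ltac ordh := repeat match goal with x : 'I_n |- _ =>
   have := ltn_ord x; have : \val x = nat_of_ord x by []; move: x => /= x ? ? end.
Ltac fin := cases; try (exfalso; lia); by rewrite ?add0r ?addr0 ?mulr1n ?mulr0n ?oppr0 ?mulrNN ?mul1r ?mulr0.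

Lemma LS_CC : LS R n = 3%:R^-1 *: (4%:R%:M - CC - CC^T).
Proof.
apply/matrixP => i j; rewrite !mxE -val_eqE /=.
have := ltn_ord i; have := ltn_ord j; move=> ? ?.
cases; try (exfalso; lia); rewrite ?mulr1n ?mulr0n; (field; done).
Qed.

Definition kp (i : 'I_n) : 'I_n := insubd i (if val i == 0%N then n.-1 else (val i).-1).

Lemma val_kp i : val (kp i) = (if val i == 0%N then n.-1 else (val i).-1).
Proof. rewrite val_insubd; have := ltn_ord i; case: eqP => _ /= ?; rewrite ifT //; lia. Qed.

Lemma colC k i : CC k i = if k == kp i then (if val i == 0%N then -1 else 1) else 0.
Proof.
rewrite mxE -val_eqE val_kp.
case: k => [k hk]; case: i => [i hi] /=; fin.
Qed.
Lemma CtC : CC^T *m CC = 1%:M.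
Proof.
apply/matrixP => i j; rewrite !mxE.
under eq_bigr => k _ do rewrite mxE [CC k i]colC.
rewrite (bigD1 (kp i)) //= big1 ?addr0 => [|k /negPf -> ]; last by rewrite mul0r.
rewrite eqxx mxE -val_eqE val_kp.
case: i => [i hi]; case: j => [j hj] /=; fin. Qed.

Lemma char_poly_cast m1 m2 (e : m1 = m2) (A : 'M[R]_m1) :
  char_poly (castmx (e,e) A) = char_poly A.
Proof. by case: m2 / e; rewrite castmx_id. Qed.

Lemma size_pC : (size ('X^n + 1%:P : {poly R})).-1 = n.
Proof. by rewrite size_XnaddC //; lia. Qed.

Lemma charCC : char_poly CC = 'X^n + 1%:P.
Proof.
have -> : CC = castmx (size_pC, size_pC) (companionmx ('X^n + 1%:P)).
  apply/matrixP => i j; rewrite castmxE !mxE /= coefD coefXn coefC size_pC.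
  case: i => [i hi]; case: j => [j hj] /=; fin.
by rewrite char_poly_cast companionmxK // monicE lead_coefXnaddC //; lia.
Qed.
Fixpoint Vp (k : nat) : {poly R} :=
  match k with 0 => 2 | 1 => 'X | S ((S k1) as k2) => 'X * Vp k2 - Vp k1 end.
Fixpoint Up (k : nat) : {poly R} :=
  match k with 0 => 1 | 1 => 'X | S ((S k1) as k2) => 'X * Up k2 - Up k1 end.

Lemma Vp_eval a b k : a * b = 1 -> (Vp k).[a + b] = a ^+ k + b ^+ k.
Proof.
move=> hab.
suff H : forall k, (Vp k).[a + b] = a ^+ k + b ^+ k /\ (Vp k.+1).[a + b] = a ^+ k.+1 + b ^+ k.+1 by case: (H k).
clear k; elim => [|k [IH1 IH2]]; first by split; rewrite /= ?hornerE // expr0 expr1.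
split => //; rewrite [Vp _]/= hornerD hornerN hornerM hornerX IH1 IH2.
have -> : (a + b) * (a ^+ k.+1 + b ^+ k.+1) - (a ^+ k + b ^+ k) =
  a ^+ k.+2 + b ^+ k.+2 + (a * b - 1) * (a ^+ k + b ^+ k) by rewrite !exprS; ring.
by rewrite hab subrr mul0r addr0.
Qed.

Lemma Up_eval a b k : a * b = 1 -> (Up k).[a + b] * (a - b) = a ^+ k.+1 - b ^+ k.+1.
Proof.
move=> hab.
suff H : forall k, (Up k).[a + b] * (a - b) = a ^+ k.+1 - b ^+ k.+1 /\
   (Up k.+1).[a + b] * (a - b) = a ^+ k.+2 - b ^+ k.+2 by case: (H k).
clear k; elim => [|k [IH1 IH2]].
  split; rewrite /= ?hornerE ?mul1r ?expr1 //.
  have -> : (a + b) * (a - b) = a^+2 - b^+2 + (a * b - a * b) by ring.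
  by rewrite subrr addr0.
split => //; rewrite [Up _]/= hornerD hornerN hornerM hornerX mulrBl -mulrA IH2 IH1.
have -> : (a + b) * (a ^+ k.+2 - b ^+ k.+2) - (a ^+ k.+1 - b ^+ k.+1) =
  a ^+ k.+3 - b ^+ k.+3 + (a * b - 1) * (a ^+ k.+1 - b ^+ k.+1) by rewrite !exprS; ring.
by rewrite hab subrr mul0r addr0.
Qed.

Lemma Vp_Up k : Vp k.+2 = 'X * Up k.+1 - Up k *+ 2.
Proof.
suff H : forall k, Vp k.+2 = 'X * Up k.+1 - Up k *+ 2 /\ Vp k.+3 = 'X * Up k.+2 - Up k.+1 *+ 2 by case: (H k).
clear k; elim => [|k [IH1 IH2]]; first by split; rewrite /=; ring.
split => //.
have -> : Vp k.+4 = 'X * Vp k.+3 - Vp k.+2 by [].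
have -> : Up k.+3 = 'X * Up k.+2 - Up k.+1 by [].
rewrite IH1 IH2.
have -> : Up k.+2 = 'X * Up k.+1 - Up k by [].
ring.
Qed.

Lemma Vp_deriv k : (Vp k.+1)^`() = Up k *+ k.+1.
Proof.
suff H : forall k, (Vp k.+1)^`() = Up k *+ k.+1 /\ (Vp k.+2)^`() = Up k.+1 *+ k.+2 by case: (H k).
clear k; elim => [|k [IH1 IH2]].
  split; rewrite /= ?derivX //.
  rewrite derivB derivM derivX -polyC_natr derivC; ring.
split => //.
have -> : Vp k.+3 = 'X * Vp k.+2 - Vp k.+1 by [].
rewrite derivB derivM derivX IH1 IH2 mul1r Vp_Up.
have -> : Up k.+2 = 'X * Up k.+1 - Up k by [].
ring.
Qed.

Lemma prod_deriv_sum (I : Type) (r : seq I) (d : I -> R) : (forall i, d i != 0) ->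
  ((\prod_(i <- r) ('X - (d i)%:P))^`()).[0] =
  - (\prod_(i <- r) ('X - (d i)%:P)).[0] * \sum_(i <- r) (d i)^-1.
Proof.
move=> hd; elim: r => [|a r IH]; first by rewrite !big_nil -polyC1 derivC !hornerE.
rewrite !big_cons derivM derivXsubC !hornerE IH.
have := hd a; move: (d a) => x hx.
by field.
Qed.

Lemma eval_char (m : nat) (A : 'M[R]_m) x : (char_poly A).[x] = \det (x%:M - A).
Proof.
rewrite /char_poly /char_poly_mx horner_sum; apply: eq_bigr => s _.
rewrite hornerM horner_exp !hornerE; congr (_ * _).
rewrite (big_morph _ (fun p q => hornerM p q x) (hornerC 1 x)).
by apply: eq_bigr => i _; rewrite !mxE !(hornerE, hornerMn).
Qed.

Lemma det_shift a : \det (CC - a%:M) = (-1) ^+ n * (a ^+ n + 1).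
Proof.
have := eval_char CC a; rewrite charCC !hornerE => ->.
by rewrite -opprB -scaleN1r detZ.
Qed.

Lemma detCC : \det CC = (-1) ^+ n.
Proof.
have := char_poly_det CC; rewrite charCC coefD coefXn coefC /=.
have -> : (0 == n)%N = false by apply/eqP; lia.
rewrite add0r => h; by rewrite -[\det CC](signrMK n) -h mulr1.
Qed.

Lemma mx_ident (C : 'M[R]_n) a b : C^T *m C = 1%:M ->
  C^T *m ((C - a%:M) *m (C - b%:M)) = C - (a + b)%:M + (a * b) *: C^T.
Proof.
move=> hC.
rewrite mulmxBl !mulmxBr !mul_mx_scalar mul_scalar_mx mulmxA hC mul1mx -!scalemxAr hC mul_mx_scalar.
apply/matrixP => i j; rewrite !mxE; ring.
Qed.

Lemma mx_ident2 (C : 'M[R]_n) x a b : a * b = 1 -> a + b = 4%:R - 3%:R * x ->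
  x%:M - 3%:R^-1 *: (4%:R%:M - C - C^T) = 3%:R^-1 *: (C - (a + b)%:M + (a * b) *: C^T).
Proof.
move=> hab hc; rewrite hab hc.
apply/matrixP => i j; rewrite !mxE; case: (i == j); rewrite ?mulr1n ?mulr0n; (field; done).
Qed.

Lemma key x a b : a * b = 1 -> a + b = 4%:R - 3%:R * x ->
  (char_poly (LS R n)).[x] = (3%:R^-1) ^+ n * (-1) ^+ n * (a ^+ n + b ^+ n + 2).
Proof.
move=> hab hc.
rewrite eval_char LS_CC (mx_ident2 _ hab hc) -mx_ident ?CtC //.
rewrite detZ !det_mulmx det_tr detCC !det_shift.
have hn2 : a ^+ n * b ^+ n = 1 by rewrite -exprMn hab expr1n.
have ss : (-1) ^+ n * (-1) ^+ n = 1 :> R by rewrite -[RHS](signrMK n) mulr1.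
transitivity ((3%:R^-1) ^+ n * (-1) ^+ n * ((-1) ^+ n * (-1) ^+ n) * ((a ^+ n + 1) * (b ^+ n + 1))).
  ring.
rewrite ss mulr1.
congr (_ * _).
have -> : (a ^+ n + 1) * (b ^+ n + 1) = a ^+ n * b ^+ n + a ^+ n + b ^+ n + 1 by ring.
rewrite hn2; ring.
Qed.
End M.

Theorem lemma4p2 (R : rcfType) (n : nat) (hn : (3 <= n)%N) (delta : 'I_n -> R) :
  char_poly (LS R n) = \prod_(i < n) ('X - (delta i)%:P) ->
  (forall i, 0 < delta i) /\
  \sum_(i < n) (delta i)^-1 =
    let p := 2 + Num.sqrt 3%:R in
    let q := 2 - Num.sqrt 3%:R in
    Num.sqrt 3%:R * n%:R / 2%:R * ((p ^+ n - q ^+ n) / (p ^+ n + q ^+ n + 2%:R)).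
Proof.
move=> H.
set chi := char_poly (LS R n).
pose q : {poly R} := (4%:R)%:P - 3%:R *: 'X.
pose W := ((3%:R^-1) ^+ n * (-1) ^+ n) *: (Vp R n \Po q + 2).
have hq x : q.[x] = 4%:R - 3%:R * x by rewrite !hornerE.
have KL : forall x : R, x <= 0 -> exists a b : R, [/\ 0 < a, 0 < b,
    chi.[x] = (3%:R^-1) ^+ n * (-1) ^+ n * (a ^+ n + b ^+ n + 2) &
    W.[x] = (3%:R^-1) ^+ n * (-1) ^+ n * (a ^+ n + b ^+ n + 2)].
  move=> x hx.
  set c := 4%:R - 3%:R * x.
  have hc : 4%:R <= c by rewrite /c; lra.
  set s := Num.sqrt (c ^+ 2 - 4%:R).
  have hs : s ^+ 2 = c ^+ 2 - 4%:R by rewrite sqr_sqrtr //; nra.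
  have s0 : 0 <= s by apply: sqrtr_ge0.
  have hab : (c + s) / 2%:R * ((c - s) / 2%:R) = 1.
    transitivity ((c ^+ 2 - s ^+ 2) / 4%:R); first by field.
    by rewrite hs; field.
  have hsum : (c + s) / 2%:R + (c - s) / 2%:R = 4%:R - 3%:R * x by rewrite /c; field.
  have ha : 0 < (c + s) / 2%:R by apply: divr_gt0; lra.
  exists ((c + s) / 2%:R), ((c - s) / 2%:R); split => //.
  - move: hab ha; move: ((c + s) / 2%:R) ((c - s) / 2%:R) => u v huv hu; nra.
  - have := key hn hab hsum. rewrite -/chi. move=> ->. done.
  rewrite hornerZ hornerD horner_comp hq -hsum Vp_eval // !hornerE.
  done.
have hW : chi = W.
  apply/eqP; rewrite -subr_eq0; apply/eqP.
  apply: (@roots_geq_poly_eq0 _ _ [seq - (i%:R) | i <- iota 0 (size (chi - W))]).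
  - apply/allP => y /mapP [i _ ->]; rewrite /root hornerD hornerN.
    have hi : - i%:R <= 0 :> R by rewrite oppr_le0 ler0n.
    have [a [b [_ _ h1 h2]]] := KL _ hi.
    by rewrite h1 h2 subrr.
  - rewrite map_inj_uniq ?iota_uniq // => i j /oppr_inj /eqP; rewrite eqr_nat => /eqP //.
  - by rewrite size_map size_iota.
have hpos : forall i, 0 < delta i.
  move=> i; rewrite ltNge; apply/negP => hle.
  have [a [b [ha hb h1 _]]] := KL _ hle.
  have h0 : chi.[delta i] = 0.
    by rewrite /chi H horner_prod (bigD1 i) //= !hornerE subrr mul0r.
  have hA : 0 < a ^+ n + b ^+ n + 2.
    have := exprn_gt0 n ha; have := exprn_gt0 n hb; lra.
  have : (3%:R^-1) ^+ n * (-1) ^+ n * (a ^+ n + b ^+ n + 2) != 0.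
    by rewrite !mulf_neq0 ?expf_neq0 ?invr_eq0 ?pnatr_eq0 ?oppr_eq0 ?oner_eq0 ?lt0r_neq0.
  by rewrite -h1 h0 eqxx.
split => //.
have hd : forall i, delta i != 0 by move=> i; rewrite lt0r_neq0.
have hs := @prod_deriv_sum R _ (index_enum 'I_n) delta hd.
rewrite -H -/chi hW in hs.
rewrite /=.
set r := Num.sqrt 3%:R.
have hr : r ^+ 2 = 3%:R by rewrite sqr_sqrtr // ler0n.
have hr0 : 0 < r by rewrite sqrtr_gt0 ltr0n.
have hpq : (2%:R + r) * (2%:R - r) = 1.
  transitivity (4%:R - r ^+ 2); first by ring.
  rewrite hr; ring.
have hpq' : (2%:R + r) + (2%:R - r) = 4%:R by ring.
have hPQ : 0 < 2%:R - r.
  have : 0 < (2%:R + r) by lra.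
  move: hpq; move: (2%:R + r) (2%:R - r) => u v huv hu; nra.
set K := (3%:R^-1) ^+ n * (-1) ^+ n : R.
have hW0 : W.[0] = K * ((2%:R + r) ^+ n + (2%:R - r) ^+ n + 2%:R).
  by rewrite hornerZ hornerD horner_comp hq mulr0 subr0 -hpq' Vp_eval // -polyC_natr hornerC.
have hn0 : (0 < n)%N by lia.
have hd' : (Vp R n)^`() = Up R n.-1 *+ n by rewrite -{1}(prednK hn0) Vp_deriv prednK.
have hU : (Up R n.-1).[4%:R] * (2%:R * r) = (2%:R + r) ^+ n - (2%:R - r) ^+ n.
  have -> : 2%:R * r = (2%:R + r) - (2%:R - r) by ring.
  by rewrite -hpq' Up_eval // prednK.
have hW1 : (W^`()).[0] = K * ((Up R n.-1).[4%:R] * n%:R * (- 3%:R)).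
  rewrite derivZ derivD deriv_comp hd' -polyC_natr derivC addr0 /q.
  rewrite derivB derivC derivZ derivX hornerZ hornerM horner_comp hq mulr0 subr0.
  rewrite sub0r hornerN hornerZ -polyC1 hornerC hornerMn -(mulr_natr (Up R n.-1).[4%:R] n) /K; ring.
have hK : K != 0 by rewrite /K !mulf_neq0 ?expf_neq0 ?invr_eq0 ?pnatr_eq0 ?oppr_eq0 ?oner_eq0.
have hD : 0 < (2%:R + r) ^+ n + (2%:R - r) ^+ n + 2%:R.
  have := exprn_gt0 n hPQ; have : 0 < (2%:R + r) ^+ n by apply: exprn_gt0; lra.
  lra.
have hW00 : W.[0] != 0 by rewrite hW0; apply: mulf_neq0 => //; apply: lt0r_neq0.
have -> : \sum_(i < n) (delta i)^-1 = - (W^`()).[0] / W.[0] by rewrite hs; field.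
rewrite hW0 hW1 -hU.
move: hD; move: ((2%:R + r) ^+ n + (2%:R - r) ^+ n + 2%:R) (Up R n.-1).[4%:R] => D U hD.
have hD0 : D != 0 by rewrite lt0r_neq0.
transitivity (r ^+ 2 * n%:R * U / D).
  rewrite hr; field; rewrite ?hK ?hD0 //.
by field.
Qed.
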